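(* Every sawed tree $F$ of height $n$ validates $\mathbf{PL}_n$.
   Context: A finite tree is a finite rooted poset in which each $\downarrow x$ is a chain; $\mathrm{Top}(T)$ is its set of maximal elements. Let $T$ be a finite tree of height $>0$ all of whose top elements have the same height, with a plane ordering $\prec$ of $\mathrm{Top}(T)$ (a linear order such that each $\uparrow x\cap\mathrm{Top}(T)$ is a $\prec$-interval); enumerate $\mathrm{Top}(T)=\{t_1\prec\cdots\prec t_k\}$. The sawed tree based on $(T,\prec)$ is $T$ together with new elements $s_1,\dots,s_{k-1}$ with $t_i<s_i$ and $t_{i+1}<s_i$ (closed under transitivity). The height of a poset is the maximum of $|C|-1$ over chains $C$. For a finite rooted poset $Q$, $\chi(Q)$ is its Jankov–Fine formula: a frame validates $\chi(Q)$ iff it has no surjective p-morphism (map with $f(\uparrow x)=\uparrow f(x)$) from an upset of it onto $Q$. $\mathbf{BD}_n$ is the logic of all finite frames of height at most $n$. The 3-fork is $\{r,a,b,c\}$ with $r<a,r<b,r<c$ only; the Scott frame is $\{r,u_1,u_2,v\}$ with $r<u_1<u_2$, $r<v$ (and $r<u_2$) only. $\mathbf{PL}_n$ is the smallest intermediate logic containing $\mathbf{BD}_n$, $\chi(\text{3-fork})$ and $\chi(\text{Scott frame})$. *)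

(* Defs.v *)
From mathcomp Require Import all_boot.
Set Implicit Arguments. Unset Strict Implicit. Unset Printing Implicit Defensive.

Inductive form : Type :=
| Var : nat -> form
| Bot : form
| And : form -> form -> form
| Or  : form -> form -> form
| Imp : form -> form -> form.

Fixpoint subst (s : nat -> form) (f : form) : form :=
  match f with
  | Var p => s p
  | Bot => Bot
  | And a b => And (subst s a) (subst s b)
  | Or a b => Or (subst s a) (subst s b)
  | Imp a b => Imp (subst s a) (subst s b)
  end.

Definition porder (T : finType) (R : rel T) : Prop :=
  [/\ reflexive R, antisymmetric R & transitive R].

Fixpoint forces (T : finType) (R : rel T) (V : nat -> T -> bool) (x : T) (f : form) : Prop :=
  match f with
  | Var p => V p x
  | Bot => False
  | And a b => forces R V x a /\ forces R V x b
  | Or a b => forces R V x a \/ forces R V x b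
  | Imp a b => forall y, R x y -> forces R V y a -> forces R V y b
  end.

Definition upval (T : finType) (R : rel T) (V : nat -> T -> bool) : Prop :=
  forall p x y, R x y -> V p x -> V p y.

Definition valid (T : finType) (R : rel T) (f : form) : Prop :=
  forall V, upval R V -> forall x, forces R V x f.

Definition chain (T : finType) (R : rel T) (C : {set T}) : bool :=
  [forall x in C, forall y in C, R x y || R y x].

Definition height (T : finType) (R : rel T) : nat :=
  \max_(C : {set T} | chain R C) (#|C|.-1).

Definition BD (n : nat) (f : form) : Prop :=
  forall (T : finType) (R : rel T), porder R -> height R <= n -> valid R f.

Definition upset (T : finType) (R : rel T) (U : {set T}) : Prop :=
  forall x y, R x y -> x \in U -> y \in U.

Definition surj_pmorph_from_upset (T Q : finType) (R : rel T) (RQ : rel Q)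
    (U : {set T}) (f : T -> Q) : Prop :=
  [/\ upset R U,
      (forall x y, x \in U -> R x y -> RQ (f x) (f y)),
      (forall x q, x \in U -> RQ (f x) q -> exists2 y, R x y & f y = q) &
      (forall q, exists2 x, x \in U & f x = q)].

(** [jankov RQ chi] : chi has the defining property of the Jankov–Fine
    formula of the finite rooted poset (Q,RQ): a finite frame validates chi
    iff there is no surjective p-morphism from an upset of it onto Q. *)
Definition jankov (Q : finType) (RQ : rel Q) (chi : form) : Prop :=
  forall (T : finType) (R : rel T), porder R ->
    (valid R chi <->
     ~ exists (U : {set T}) (f : T -> Q), surj_pmorph_from_upset R RQ U f).

(** The 3-fork {r,a,b,c}: None is the root r. *)
Definition fork_rel : rel (option 'I_3) := fun x y => (x == y) || (x == None).

(** The Scott frame {r,u1,u2,v} encoded as 0,1,2,3 in 'I_4. *)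
Definition scott_rel : rel 'I_4 := fun x y =>
  (x == y) || (nat_of_ord x == 0) || ((nat_of_ord x == 1) && (nat_of_ord y == 2)).

Inductive PL (n : nat) (cf cs : form) : form -> Prop :=
| PL_K a b : PL n cf cs (Imp a (Imp b a))
| PL_S a b c : PL n cf cs (Imp (Imp a (Imp b c)) (Imp (Imp a b) (Imp a c)))
| PL_andE1 a b : PL n cf cs (Imp (And a b) a)
| PL_andE2 a b : PL n cf cs (Imp (And a b) b)
| PL_andI a b : PL n cf cs (Imp a (Imp b (And a b)))
| PL_orI1 a b : PL n cf cs (Imp a (Or a b))
| PL_orI2 a b : PL n cf cs (Imp b (Or a b))
| PL_orE a b c : PL n cf cs (Imp (Imp a c) (Imp (Imp b c) (Imp (Or a b) c)))
| PL_botE a : PL n cf cs (Imp Bot a)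
| PL_BD a : BD n a -> PL n cf cs a
| PL_fork : PL n cf cs cf
| PL_scott : PL n cf cs cs
| PL_MP a b : PL n cf cs (Imp a b) -> PL n cf cs a -> PL n cf cs b
| PL_subst s a : PL n cf cs a -> PL n cf cs (subst s a).

Definition maximal (T : finType) (R : rel T) (x : T) : bool :=
  [forall y, R x y ==> (y == x)].

Definition is_tree (T : finType) (R : rel T) : Prop :=
  [/\ porder R, (exists r, forall x, R r x) &
      (forall x y z, R y x -> R z x -> R y z || R z y)].

(** [t] enumerates Top(T) as t_1 < ... < t_k along a plane ordering:
    each up-set of a point meets Top(T) in an interval. *)
Definition plane_order (T : finType) (R : rel T) (t : seq T) : Prop :=
  [/\ uniq t, (forall x, (x \in t) = maximal R x) &
      (forall x i j l, i <= j -> j <= l -> l < size t ->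
         R x (nth x t i) -> R x (nth x t l) -> R x (nth x t j))].

(** The sawed tree: T plus saws s_i (i < k-1) with t_i < s_i, t_{i+1} < s_i *)
Definition sawed_type (T : finType) (t : seq T) : finType :=
  (T + 'I_(size t).-1)%type.

Definition sawed_rel (T : finType) (R : rel T) (t : seq T) : rel (sawed_type t) :=
  fun a b =>
    match a, b with
    | inl x, inl y => R x y
    | inl x, inr i => R x (nth x t i) || R x (nth x t i.+1)
    | inr i, inr j => i == j
    | inr _, inl _ => false
    end.

Arguments sawed_rel {T} R t : rename.

(* Main.v *)
Require Import Defs.
From mathcomp Require Import all_boot.
From mathcomp Require Import zify.
From Stdlib Require Import Classical ClassicalEpsilon.
Set Implicit Arguments. Unset Strict Implicit. Unset Printing Implicit Defensive.

Lemma persist (T : finType) (R : rel T) V : transitive R -> upval R V ->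
  forall f x y, R x y -> forces R V x f -> forces R V y f.
Proof.
move=> tr hV; elim=> [p||a IHa b IHb|a IHa b IHb|a IHa b IHb] x y xy /=.
- exact: hV.
- by [].
- by case=> ??; split; [apply: IHa xy _ | apply: IHb xy _].
- by case=> ?; [left; apply: IHa xy _ | right; apply: IHb xy _].
- move=> h z yz; apply: h; exact: tr xy yz.
Qed.

Definition dec (P : Prop) : bool := if excluded_middle_informative P then true else false.
Lemma decP P : dec P <-> P.
Proof. by rewrite /dec; case: excluded_middle_informative. Qed.

Lemma forces_subst (T : finType) (R : rel T) V s a x :
  forces R (fun p y => dec (forces R V y (s p))) x a <-> forces R V x (subst s a).
Proof.
elim: a x => [p||a IHa b IHb|a IHa b IHb|a IHa b IHb] x /=.
- exact: decP.
- by [].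
- by split; case=> h1 h2; split; [apply/IHa|apply/IHb|apply/IHa|apply/IHb].
- by split; case=> h; [left; apply/IHa|right; apply/IHb|left; apply/IHa|right; apply/IHb].
- split=> h y xy hy.
  + by apply/IHb; apply: h xy _; apply/IHa.
  + by apply/IHb; apply: h xy _; apply/IHa.
Qed.

Lemma valid_subst (T : finType) (R : rel T) s a : transitive R ->
  valid R a -> valid R (subst s a).
Proof.
move=> tr va V hV x; apply/forces_subst; apply: va.
move=> p y z yz /decP h; apply/decP; exact: persist tr hV _ _ _ yz h.
Qed.

Lemma exists_max (U : finType) (S : rel U) : porder S ->
  forall x, exists2 y, S x y & maximal S y.
Proof.
case=> rf an tr x.
have : #|[set z | S x z]| <= #|[set z | S x z]| by [].
move: {2}#|_| => n.
elim: n x => [|n IH] x hn.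
  have : 0 < #|[set z | S x z]| by apply/card_gt0P; exists x; rewrite inE rf.
  by rewrite leqn0 in hn; rewrite (eqP hn).
case: (boolP (maximal S x)) => mx; first by exists x.
move/forallPn: mx => [y]; rewrite negb_imply => /andP[xy ynx].
have pr : [set z | S y z] \proper [set z | S x z].
  apply/properP; split.
    by apply/subsetP=> z; rewrite !inE => yz; exact: tr xy yz.
  exists x; first by rewrite inE rf.
  rewrite inE; apply/negP=> yx; move/negP: ynx; apply; apply/eqP; apply: an.
  by rewrite xy yx.
have [z yz mz] := IH y (leq_trans (proper_card pr) hn).
by exists z => //; exact: tr xy yz.
Qed.

Lemma sawed_porder (T : finType) (R : rel T) (t : seq T) :
  porder R -> porder (sawed_rel R t).
Proof.
case=> rf an tr; split.
- by case=> [x|i] /=; rewrite ?rf ?eqxx.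
- case=> [x|i] [y|j] /=; rewrite ?andbF //.
  + by move=> h; congr inl; apply: an.
  + by move/andP=> [/eqP-> _].
- case=> [y|i] [x|j] [z|k] //=.
  + exact: tr.
  + move=> xy; have h1 : (k : nat) < size t by have := ltn_ord k; lia.
    have h2 : k.+1 < size t by have := ltn_ord k; lia.
    rewrite (set_nth_default x y h1) (set_nth_default x y h2).
    by case/orP=> h; apply/orP; [left|right]; exact: tr xy h.
  + by move=> h /eqP<-.
  + by move=> /eqP-> .
Qed.

Lemma ordp1 n (i : 'I_n.-1) : (i : nat) < n.
Proof. have := ltn_ord i; lia. Qed.
Lemma ordp2 n (i : 'I_n.-1) : i.+1 < n.
Proof. have := ltn_ord i; lia. Qed.
Lemma aux j d n : j + d.+1 < n -> [/\ j < n.-1, j < n, j.+1 < n & j.+1 <= j + d.+1].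
Proof. move=> h; split; lia. Qed.
Lemma three a b c j : (a==j)||(a.+1==j) -> (b==j)||(b.+1==j) -> (c==j)||(c.+1==j) ->
  a<>b -> a<>c -> b<>c -> False.
Proof. move=> /orP[/eqP|/eqP] ? /orP[/eqP|/eqP] ? /orP[/eqP|/eqP] ?; lia. Qed.

Lemma no_pmorph (Q : finType) (RQ : rel Q) (r0 q1 q2 q3 m1 m2 : Q) :
  reflexive RQ ->
  q1 != r0 -> q2 != r0 -> q3 != r0 -> q1 != q2 -> q1 != q3 -> q2 != q3 ->
  RQ r0 q1 -> RQ r0 q2 -> RQ r0 q3 ->
  maximal RQ m1 -> maximal RQ m2 -> m1 != m2 -> RQ r0 m1 -> RQ r0 m2 ->
  (forall q p p', q != r0 -> maximal RQ p -> maximal RQ p' -> RQ q p -> RQ q p' -> p = p') ->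
  forall (T : finType) (R : rel T) (t : seq T), porder R -> plane_order R t ->
  ~ exists U (f : sawed_type t -> Q), surj_pmorph_from_upset (sawed_rel R t) RQ U f.
Proof.
move=> rQ n1 n2 n3 n12 n13 n23 r1 r2 r3 mm1 mm2 nm rm1 rm2 Q4 T R t pR.
case=> ut mt ivl [U [f [upU fw bk su]]].
have [rf an tr] := pR.
set Fr := sawed_rel R t.
have fmax : forall z, z \in U -> maximal Fr z -> maximal RQ (f z).
  move=> z zU mz; apply/forallP=> q; apply/implyP=> fq.
  have [y zy <-] := bk _ _ zU fq.
  by rewrite (eqP (implyP (forallP mz y) zy)).
have sawmax : forall i, maximal Fr (inr i).
  by move=> i; apply/forallP=> -[y|j] //=; apply/implyP=> /eqP->.
have notop : forall d j, j < size t -> inl (nth d t j) \in U ->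
    f (inl (nth d t j)) != r0.
  move=> d j hj hU; apply/negP=> /eqP fr.
  have mtj : maximal R (nth d t j) by rewrite -mt mem_nth.
  have above : forall q, q != r0 -> RQ r0 q -> exists i : 'I_(size t).-1,
      f (inr i) = q /\ (((i : nat) == j) || ((i : nat).+1 == j)).
    move=> q hq rq; have [y hy fy] := bk _ q hU ltac:(by rewrite fr).
    case: y hy fy => [y|i] /= hy fy.
      move: (eqP (implyP (forallP mtj y) hy)) => ey.
      by move: hq; rewrite -fy ey fr eqxx.
    exists i; split => //.
    have h1 := ordp1 i; have h2 := ordp2 i.
    case/orP: hy => h; move: (eqP (implyP (forallP mtj _) h));
      rewrite ?(set_nth_default d (nth d t j) h1) ?(set_nth_default d (nth d t j) h2) => /eqP;
      rewrite nth_uniq // => ->; by rewrite ?orbT.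
  have [i1 [f1 e1]] := above _ n1 r1.
  have [i2 [f2 e2]] := above _ n2 r2.
  have [i3 [f3 e3]] := above _ n3 r3.
  have d12 : (i1 : nat) <> i2 by move/val_inj=> e; move: n12; rewrite -f1 -f2 e eqxx.
  have d13 : (i1 : nat) <> i3 by move/val_inj=> e; move: n13; rewrite -f1 -f3 e eqxx.
  have d23 : (i2 : nat) <> i3 by move/val_inj=> e; move: n23; rewrite -f2 -f3 e eqxx.
  exact: (three e1 e2 e3 d12 d13 d23).
have [x xU fx] := su r0.
case: x xU fx => [x0|i] xU fx; last first.
  have [y hy fy] := bk _ q1 xU ltac:(by rewrite fx).
  case: y hy fy => [y|j] //= /eqP <-; rewrite fx => e.
  by move: n1; rewrite e eqxx.
have inU : forall y, Fr (inl x0) y -> y \in U by move=> y hy; exact: upU hy xU.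
have color : forall y, Fr (inl x0) y -> maximal RQ (f y) ->
    exists2 j, j < size t & R x0 (nth x0 t j) && RQ (f (inl (nth x0 t j))) (f y).
  case=> [y|i] /= hy my.
  - have [z yz mz] := exists_max pR y.
    have zt : z \in t by rewrite mt.
    exists (index z t); first by rewrite index_mem.
    rewrite nth_index // (tr _ _ _ hy yz) /=.
    have := fw (inl y) (inl z) (inU (inl y) hy) yz.
    by move=> h; rewrite -(eqP (implyP (forallP my _) h)) rQ.
  - have h1 := ordp1 i; have h2 := ordp2 i.
    case/orP: hy => h; [exists i | exists i.+1]; rewrite // h /=;
      (apply: (fw (inl _) (inr i)); [by apply: inU|]) => /=;
      by rewrite ?(set_nth_default x0 (nth x0 t i) h1) ?(set_nth_default x0 (nth x0 t i.+1) h2) rf ?orbT.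
have connect : forall dd j, j + dd < size t -> R x0 (nth x0 t j) ->
    R x0 (nth x0 t (j + dd)) -> forall p p', maximal RQ p -> maximal RQ p' ->
    RQ (f (inl (nth x0 t j))) p -> RQ (f (inl (nth x0 t (j + dd)))) p' -> p = p'.
  elim=> [|dd IH] j hj rj rjd p p' mp mp' h h'.
    rewrite addn0 in h' hj.
    apply: (Q4 _ _ _ _ mp mp' h h'); apply: notop => //; exact: inU.
  have [hj' hj1 hj2 hj3] := aux hj.
  set s := Ordinal hj'.
  have rj1 : R x0 (nth x0 t j.+1).
    by apply: (ivl x0 j j.+1 (j + dd.+1)) => //; exact: leqnSn.
  have sU : inr s \in U by apply: inU => /=; rewrite rj.
  have ms := fmax _ sU (sawmax s).
  have a1 : RQ (f (inl (nth x0 t j))) (f (inr s)).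
    apply: fw; first by apply: inU.
    by rewrite /= (set_nth_default x0 _ hj1) rf.
  have a2 : RQ (f (inl (nth x0 t j.+1))) (f (inr s)).
    apply: fw; first by apply: inU.
    by rewrite /= (set_nth_default x0 _ hj2) rf orbT.
  have -> : p = f (inr s).
    apply: (Q4 _ _ _ _ mp ms h a1); apply: notop => //; exact: inU.
  apply: (IH j.+1) => //; rewrite ?addSnnS //.
have [y1 hy1 fy1] := bk _ m1 xU ltac:(by rewrite fx).
have [y2 hy2 fy2] := bk _ m2 xU ltac:(by rewrite fx).
have [j1 hj1 /andP[rj1 c1]] := color y1 hy1 ltac:(by rewrite fy1).
have [j2 hj2 /andP[rj2 c2]] := color y2 hy2 ltac:(by rewrite fy2).
rewrite fy1 in c1; rewrite fy2 in c2.
move/negP: nm; apply; apply/eqP.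
case: (leqP j1 j2) => hle.
  apply: (connect (j2 - j1) j1); rewrite ?subnKC //.
have := connect (j1 - j2) j2; rewrite subnKC ?(ltnW hle) // => h.
by symmetry; apply: h.
Qed.

Lemma fork_ok (T : finType) (R : rel T) (t : seq T) : porder R -> plane_order R t ->
  ~ exists U (f : sawed_type t -> option 'I_3),
      surj_pmorph_from_upset (sawed_rel R t) fork_rel U f.
Proof.
apply: (@no_pmorph _ fork_rel None (Some (@Ordinal 3 0 erefl)) (Some (@Ordinal 3 1 erefl))
  (Some (@Ordinal 3 2 erefl)) (Some (@Ordinal 3 0 erefl)) (Some (@Ordinal 3 1 erefl))) => //.
- by move=> x; rewrite /fork_rel eqxx.
- by apply/forallP; case=> [[[|[|[|]]] ?]|] //=.
- by apply/forallP; case=> [[[|[|[|]]] ?]|] //=.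
- move=> q p p' hq _ _; rewrite /fork_rel (negbTE hq) !orbF.
  by move=> /eqP <- /eqP.
Qed.

Lemma scott_nm (H : 1 < 4) : ~~ maximal scott_rel (Ordinal H).
Proof. by apply/forallPn; exists (@Ordinal 4 2 erefl). Qed.
Lemma scott_nm' (H : 1 < 4) : maximal scott_rel (Ordinal H) -> False.
Proof. by move=> h; move: (scott_nm H); rewrite h. Qed.

Lemma scott_ok (T : finType) (R : rel T) (t : seq T) : porder R -> plane_order R t ->
  ~ exists U (f : sawed_type t -> 'I_4),
      surj_pmorph_from_upset (sawed_rel R t) scott_rel U f.
Proof.
apply: (@no_pmorph _ scott_rel (@Ordinal 4 0 erefl) (@Ordinal 4 1 erefl) (@Ordinal 4 2 erefl)
  (@Ordinal 4 3 erefl) (@Ordinal 4 2 erefl) (@Ordinal 4 3 erefl)) => //.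
- by move=> x; rewrite /scott_rel eqxx.
- by apply/forallP; case=> [[|[|[|[|]]]] ?] //=.
- by apply/forallP; case=> [[|[|[|[|]]]] ?] //=.
- move=> q p p' hq mp mp' h h'; apply: val_inj.
  move: hq mp mp' h h'.
  case: q => [[|[|[|[|q]]]] ?] //; case: p => [[|[|[|[|p]]]] ?] //;
    case: p' => [[|[|[|[|p']]]] ?] //; rewrite ?scott_nm ?andbF //.
  all: move=> _ m1 m2 _ _; first [case: (scott_nm' m1) | case: (scott_nm' m2)].
Qed.

Theorem lemma7p7 (T : finType) (R : rel T) (t : seq T) (cf cs : form) :
  is_tree R -> 0 < height R ->
  (forall x y, maximal R x -> maximal R y ->
     #|[set z | R z x]| = #|[set z | R z y]|) ->
  plane_order R t ->
  jankov fork_rel cf -> jankov scott_rel cs ->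
  forall phi, PL (height (sawed_rel R t)) cf cs phi -> valid (sawed_rel R t) phi.
Proof.
case=> pR _ _ _ _ pt jf js phi.
have pF := sawed_porder t pR.
have [rF _ tF] := pF.
have per := persist tF.
elim=> {phi} /=.
- by move=> a b V hV x /= y _ ha z yz _; exact: per hV _ _ _ yz ha.
- move=> a b c V hV x /= y _ h1 z yz h2 w zw h3.
  have yw := tF _ _ _ yz zw.
  by apply: (h1 w yw h3 w (rF w)); apply: h2 w zw h3.
- by move=> a b V hV x /= y _ [].
- by move=> a b V hV x /= y _ [].
- move=> a b V hV x /= y _ ha z yz hb; split => //; exact: per hV _ _ _ yz ha.
- by move=> a b V hV x /= y _ ha; left.
- by move=> a b V hV x /= y _ ha; right.
- move=> a b c V hV x /= y _ h1 z yz h2 w zw [].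
  + by apply: h1; exact: tF yz zw.
  + by apply: h2.
- by move=> a V hV x /= y _ [].
- by move=> a ha; apply: ha.
- by apply/(jf _ _ pF); apply: fork_ok.
- by apply/(js _ _ pF); apply: scott_ok.
- move=> a b _ hab _ ha V hV x.
  by apply: (hab V hV x x (rF x)); apply: ha.
- move=> s a _ ha; exact: valid_subst.
Qed.
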